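(* For all integers $m\ge 2$ and $f$ with $0\le f\le \binom{m}{2}$ there exists a constant $c>0$ such that $h_2(n,m,f) > c\, n^{1/(m-1)}$ for all $n\ge 1$. That is, every $n$-vertex graph $G$ that contains no induced subgraph with exactly $m$ vertices and exactly $f$ edges has a clique or an independent set of size greater than $c\,n^{1/(m-1)}$.
   Context: For an $r$-uniform hypergraph ($r$-graph) $H$, a homogeneous set is a set of vertices that is either a clique (every $r$-subset is an edge) or a coclique (no $r$-subset is an edge); $h(H)$ denotes the size of a largest homogeneous set. An $(m,f)$-graph is an $r$-graph with $m$ vertices and $f$ edges; $H$ is $(m,f)$-free if it contains no induced sub-hypergraph that is an $(m,f)$-graph. For a set $Q$ of pairs $(m,f)$, $H$ is $Q$-free if it is $(m,f)$-free for every $(m,f)\in Q$. $h_r(n,Q)$ is the minimum of $h(H)$ over all $n$-vertex $Q$-free $r$-graphs $H$, and $h_r(n,m,f)=h_r(n,\{(m,f)\})$. A 2-graph is a graph. *)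

(* Defs.v *)
From mathcomp Require Import all_boot.
From Stdlib Require Import Reals.
Set Implicit Arguments. Unset Strict Implicit. Unset Printing Implicit Defensive.

Definition simple_graph (T : finType) (e : rel T) : Prop :=
  (forall x y, e x y = e y x) /\ (forall x, ~~ e x x).

Definition is_clique (T : finType) (e : rel T) (S : {set T}) : Prop :=
  forall x y, x \in S -> y \in S -> x != y -> e x y.

Definition is_coclique (T : finType) (e : rel T) (S : {set T}) : Prop :=
  forall x y, x \in S -> y \in S -> x != y -> ~~ e x y.

Definition homogeneous (T : finType) (e : rel T) (S : {set T}) : Prop :=
  is_clique e S \/ is_coclique e S.

Definition num_edges (T : finType) (e : rel T) (S : {set T}) : nat :=
  #|[set A : {set T} | (A \subset S) && (#|A| == 2)
                       && [exists x in A, exists y in A, e x y]]|.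

Definition has_induced_mf (T : finType) (e : rel T) (m f : nat) : Prop :=
  exists S : {set T}, #|S| = m /\ num_edges e S = f.

Definition mf_free (T : finType) (e : rel T) (m f : nat) : Prop :=
  ~ has_induced_mf e m f.

(* Main.v *)
Require Import Defs.
From mathcomp Require Import all_boot.
From Stdlib Require Import Reals.
From Stdlib Require Import Lra.
From mathcomp Require Import zify.
Import ssrnat.
Set Implicit Arguments. Unset Strict Implicit. Unset Printing Implicit Defensive.
Lemma greedy (T : finType) (r : rel T) : (forall x y, r x y = r y x) ->
  forall d j (W : {set T}), 0 < d -> j * d <= #|W| ->
  (forall v, v \in W -> #|[set u in W | r v u]| < d) ->
  exists S : {set T}, S \subset W /\ j <= #|S| /\
    (forall x y, x \in S -> y \in S -> x != y -> ~~ r x y).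
Proof.
move=> rsym d j; elim: j => [|j IH] W d0 hW hdeg.
  by exists set0; split; [apply: sub0set | split=> // x y; rewrite inE].
have : 0 < #|W| by move: hW; rewrite mulSn; lia.
rewrite card_gt0 => /set0Pn [v vW].
set N := [set u in W | r v u].
set W' := W :\: (v |: N).
have hW' : j * d <= #|W'|.
  rewrite /W' cardsD.
  have h1 : #|W :&: (v |: N)| <= d.
    apply: leq_trans (subset_leq_card (subsetIr _ _)) _.
    rewrite cardsU1; have := hdeg v vW; rewrite -/N; case: (v \in N) => /=; lia.
  move: hW; rewrite mulSn; lia.
have hdeg' : forall v', v' \in W' -> #|[set u in W' | r v' u]| < d.
  move=> v' hv'; have hv'W : v' \in W by move: hv'; rewrite inE => /andP[].
  apply: leq_ltn_trans (hdeg v' hv'W).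
  apply: subset_leq_card; apply/subsetP => u; rewrite !inE.
  by move=> /andP[/andP[_ ->] ->].
have [S' [sS' [cS' coS']]] := IH W' d0 hW' hdeg'.
have vS' : v \notin S'.
  apply/negP => /(subsetP sS'); by rewrite !inE eqxx.
exists (v |: S'); split; [|split].
- by rewrite subUset sub1set vW /=; apply: subset_trans sS' (subsetDl _ _).
- by rewrite cardsU1 vS'.
- have hnr : forall y, y \in S' -> ~~ r v y.
    move=> y /(subsetP sS'); rewrite !inE negb_or => /andP[/andP[_ hy] yW].
    by move: hy; rewrite yW.
  move=> x y; rewrite !inE => /orP[/eqP->|xS] /orP[/eqP->|yS]; rewrite ?eqxx //.
  + by move=> _; apply: hnr.
  + by move=> _; rewrite rsym; apply: hnr.
  + by apply: coS'.
Qed.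
Lemma num_edges1 (T : finType) (e : rel T) x : num_edges e [set x] = 0.
Proof.
apply/eqP; rewrite cards_eq0; apply/eqP/setP => A; rewrite !inE.
apply/negP => /andP[/andP[sA /eqP cA] _].
by have := subset_leq_card sA; rewrite cards1 cA.
Qed.

Lemma num_edgesU1 (T : finType) (e : rel T) v (S : {set T}) :
  simple_graph e -> v \notin S ->
  num_edges e (v |: S) = num_edges e S + #|[set u in S | e v u]|.
Proof.
move=> [esym eirr] vS.
set D := [set u in S | e v u].
set P := [set A : {set T} | (A \subset S) && (#|A| == 2)
                       && [exists x in A, exists y in A, e x y]].
have inj : {in D &, injective (fun u => [set v; u])}.
  move=> u1 u2 h1 h2 eq.
  have : u1 \in [set v; u2] by rewrite -eq !inE eqxx orbT.
  rewrite !inE => /orP[/eqP hv|/eqP //].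
  by move: h1; rewrite inE hv (negbTE vS).
have disj : P :&: [set [set v; u] | u in D] = set0.
  apply/setP => A; rewrite !inE; apply/negP => /andP[hA /imsetP[u _ hAu]].
  move: hA; rewrite hAu => /andP[/andP[sA _] _].
  by move: vS; rewrite (subsetP sA) // !inE eqxx.
rewrite /num_edges -/P -(card_in_imset inj).
have -> : [set A : {set T} | (A \subset v |: S) && (#|A| == 2)
                       && [exists x in A, exists y in A, e x y]]
          = P :|: [set [set v; u] | u in D].
  apply/setP => A; rewrite !inE; apply/idP/idP.
  - move=> /andP[/andP[sA cA] ex].
    case vA: (v \in A); last first.
      apply/orP; left; rewrite ?cA ?ex ?andbT.
      apply/subsetP => a aA; have := subsetP sA a aA; rewrite !inE => /orP[/eqP hv|//].
      by move: vA; rewrite -hv aA.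
    apply/orP; right.
    move: cA; rewrite (cardsD1 v) vA => /eqP [] /eqP /cards1P [u hu].
    have hAu : A = [set v; u] by rewrite -(setD1K vA) hu.
    have uv : u != v.
      have : u \in A :\ v by rewrite hu inE.
      by rewrite !inE eq_sym => /andP[].
    have uS : u \in S.
      have := subsetP sA u; rewrite hAu !inE eqxx orbT => /(_ isT) /orP[/eqP h|//].
      by move: uv; rewrite h eqxx.
    apply/imsetP; exists u => //; rewrite inE uS /=.
    move: ex; rewrite hAu => /existsP[x /andP[]]; rewrite !inE => /orP[]/eqP->.
    + move=> /existsP[y /andP[]]; rewrite !inE => /orP[]/eqP-> //.
      by rewrite (negbTE (eirr v)).
    + move=> /existsP[y /andP[]]; rewrite !inE => /orP[]/eqP->.
      * by rewrite esym.
      * by rewrite (negbTE (eirr u)).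
  - move=> /orP[|/imsetP[u]]; first by move=> /andP[/andP[sA ->] ->]; rewrite (subset_trans sA) // subsetUr.
    rewrite inE => /andP[uS evu] ->.
    have uv : v != u by apply/negP => /eqP hv; move: vS; rewrite hv uS.
    rewrite cards2 uv /= andbT; apply/andP; split.
      by rewrite subUset !sub1set !inE eqxx uS orbT.
    by apply/existsP; exists v; rewrite !inE eqxx /=; apply/existsP; exists u; rewrite !inE eqxx orbT.
rewrite cardsU disj cards0 subn0.
by rewrite (card_in_imset inj).
Qed.

Lemma core (T : finType) (e : rel T) k : simple_graph e -> 0 < k ->
  forall m f, f <= 'C(m.+1, 2) -> forall U : {set T}, k ^ m <= #|U| ->
  (exists S : {set T}, S \subset U /\ homogeneous e S /\ k <= #|S|) \/
  (exists S : {set T}, S \subset U /\ #|S| = m.+1 /\ num_edges e S = f).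
Proof.
move=> [esym eirr] k0 m; elim: m => [|m IH] f hf U hU.
  right; have : 0 < #|U| by move: hU; rewrite expn0.
  rewrite card_gt0 => /set0Pn [x xU]; exists [set x]; rewrite sub1set xU cards1 num_edges1.
  by move: hf; rewrite bin_small //; case: f.
have hd : 0 < k ^ m by rewrite expn_gt0 k0.
have hU' : k * k ^ m <= #|U| by rewrite -expnS.
have hC : 'C(m.+2, 2) = 'C(m.+1, 2) + m.+1 by rewrite binS bin1.
have hC1 : 'C(m.+1, 2) = 'C(m, 2) + m by rewrite binS bin1.
case: (leqP f 'C(m.+1, 2)) => hfC.
-
  set r := fun x y : T => (x != y) && ~~ e x y.
  have rsym : forall x y, r x y = r y x by move=> x y; rewrite /r eq_sym esym.
  case: (boolP [exists v in U, k ^ m <= #|[set u in U | r v u]|]).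
  + move=> /existsP [v /andP [vU hv]].
    have [[S [sS hS]]|[S [sS [cS eS]]]] := IH f hfC _ hv.
      left; exists S; split=> //; apply: subset_trans sS _.
      by apply/subsetP => u; rewrite inE => /andP[].
    have vS : v \notin S.
      by apply/negP => /(subsetP sS); rewrite !inE /r eqxx andbF.
    right; exists (v |: S); split; [|split].
    * by rewrite subUset sub1set vU /=; apply: subset_trans sS _; apply/subsetP => u; rewrite inE => /andP[].
    * by rewrite cardsU1 vS cS.
    * rewrite num_edgesU1 // eS.
      suff -> : [set u in S | e v u] = set0 by rewrite cards0 addn0.
      apply/setP => u; rewrite !inE; apply/negP => /andP[uS evu].
      by move: (subsetP sS u uS); rewrite !inE => /andP[_ /andP[_]]; rewrite evu.
  + rewrite negb_exists_in => /forallP hall.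
    have hdeg : forall v, v \in U -> #|[set u in U | r v u]| < k ^ m.
      by move=> v vU; have := hall v; rewrite vU /= ltnNge.
    have [S [sS [cS coS]]] := greedy rsym hd hU' hdeg.
    left; exists S; split=> //; split=> //; left => x y xS yS xy.
    by have := coS x y xS yS xy; rewrite /r xy /= negbK.
- have hf' : f - m.+1 <= 'C(m.+1, 2) by move: hf; rewrite hC; lia.
  case: (boolP [exists v in U, k ^ m <= #|[set u in U | e v u]|]).
  + move=> /existsP [v /andP [vU hv]].
    have [[S [sS hS]]|[S [sS [cS eS]]]] := IH _ hf' _ hv.
      left; exists S; split=> //; apply: subset_trans sS _.
      by apply/subsetP => u; rewrite inE => /andP[].
    have vS : v \notin S.
      by apply/negP => /(subsetP sS); rewrite !inE (negbTE (eirr v)) andbF.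
    right; exists (v |: S); split; [|split].
    * by rewrite subUset sub1set vU /=; apply: subset_trans sS _; apply/subsetP => u; rewrite inE => /andP[].
    * by rewrite cardsU1 vS cS.
    * rewrite num_edgesU1 // eS.
      suff -> : [set u in S | e v u] = S by rewrite cS; move: hfC; rewrite hC1; lia.
      apply/setP => u; rewrite !inE; case uS: (u \in S) => //=.
      by move: (subsetP sS u uS); rewrite !inE => /andP[].
  + rewrite negb_exists_in => /forallP hall.
    have hdeg : forall v, v \in U -> #|[set u in U | e v u]| < k ^ m.
      by move=> v vU; have := hall v; rewrite vU /= ltnNge.
    have [S [sS [cS coS]]] := greedy esym hd hU' hdeg.
    left; exists S; split=> //; split=> //; right => x y xS yS xy.
    exact: coS.
Qed.
Lemma root_ex p n : 0 < p -> 1 <= n -> exists k, 0 < k /\ k ^ p <= n /\ n < k.+1 ^ p.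
Proof.
move=> p0; elim: n => [//|n IH] hn.
case: (posnP n) => [->|n0].
  exists 1; rewrite exp1n; split=> //; split=> //.
  by rewrite -{1}(exp1n p) ltn_exp2r.
have [k [k0 [h1 h2]]] := IH n0.
case: (leqP (k.+1 ^ p) n.+1) => h3.
  exists k.+1; split=> //; split=> //.
  have : k.+1 ^ p < k.+2 ^ p by rewrite ltn_exp2r.
  lia.
by exists k; split=> //; split=> //; lia.
Qed.

Lemma natpowE a b : Nat.pow a b = a ^ b.
Proof. by elim: b => [|b IH] //=; rewrite expnS IH. Qed.

Lemma real_part (n k p s : nat) : 0 < p -> 0 < k -> 1 <= n -> n < k.+1 ^ p -> k <= s ->
  (/2 * Rpower (INR n) (1 / INR p) < INR s)%R.
Proof.
move=> p0 k0 n0 hn ks.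
have hp : (0 < INR p)%R by apply: lt_0_INR; apply/ltP.
have hk : (1 <= INR k)%R by apply: (le_INR 1); apply/leP.
have hks : (INR k <= INR s)%R by apply: le_INR; apply/leP.
have hn0 : (0 < INR n)%R by apply: lt_0_INR; apply/ltP.
have hlt : (INR n < Rpower (INR k.+1) (INR p))%R.
  rewrite Rpower_pow; last by apply: lt_0_INR; apply/ltP.
  rewrite -pow_INR; apply: lt_INR; apply/ltP.
  by rewrite natpowE.
have : (Rpower (INR n) (1 / INR p) < INR k.+1)%R.
  have := Rlt_Rpower_l (INR n) _ (1 / INR p) _ (conj hn0 hlt).
  rewrite Rpower_mult.
  have -> : (INR p * (1 / INR p) = 1)%R by field; lra.
  rewrite Rpower_1; last by apply: lt_0_INR; apply/ltP.
  apply; apply: Rdiv_lt_0_compat; lra.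
rewrite S_INR; lra.
Qed.

Theorem mainTheorem1 :
  forall m f : nat, 2 <= m -> f <= 'C(m, 2) ->
  exists c : R, (0 < c)%R /\
    forall (n : nat), 1 <= n ->
    forall (T : finType) (e : rel T),
      #|T| = n -> simple_graph e -> mf_free e m f ->
      exists S : {set T}, homogeneous e S /\
        (c * Rpower (INR n) (1 / INR (m - 1)) < INR #|S|)%R.
Proof.
move=> m f hm hf; exists (/2)%R; split; first lra.
move=> n hn T e hT hs hfree.
have p0 : 0 < m - 1 by lia.
have [k [k0 [h1 h2]]] := root_ex p0 hn.
have hm' : m = (m - 1).+1 by lia.
have hf' : f <= 'C((m - 1).+1, 2) by rewrite -hm'.
have hU : k ^ (m - 1) <= #|[set: T]| by rewrite cardsT hT.
have [[S [_ [hS cS]]]|[S [_ [cS eS]]]] := core hs k0 hf' hU.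
  exists S; split=> //; exact: (real_part p0 k0 hn h2 cS).
by exfalso; apply: hfree; exists S; rewrite cS -hm'.
Qed.
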